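(* Let $d\in\{1,2,3\}$. There are constants $\lambda_*>0$ and $C<\infty$ depending only on $d$ such that for every $R>0$: (a) $0<\frac{R^p}{|x|^p}\big(V^\infty(R)-V^\lambda(R)\big)\le V^\infty(x)-V^\lambda(x)$ for all $|x|\ge R$ and $\lambda>0$; (b) $V^\infty(x)-V^\lambda(x)\le C\frac{R^p}{|x|^p}\big(V^\infty(R)-V^\lambda(R)\big)$ for all $|x|\ge R$ and $\lambda\ge\lambda_*/R^{4-d}$. (Here $V^\lambda(R)$ means the value of the radial function $V^\lambda$ at radius $R$.)
   Context: For $\lambda>0$, $V^\lambda$ denotes the unique solution (in the distributional sense) on $\mathbb R^d$ of $\frac12\Delta V^\lambda=\frac12(V^\lambda)^2-\lambda\delta_0$, $V^\lambda>0$; it is radial and $C^2$ off $0$. $V^\infty(x)=2(4-d)|x|^{-2}$, and $V^\lambda\uparrow V^\infty$ as $\lambda\to\infty$. $p=p(d)$ with $p(1)=3$, $p(2)=2\sqrt2$, $p(3)=\frac{1+\sqrt{17}}2$. *)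

(* Defs.v *)
From Stdlib Require Import Reals Lra.
Open Scope R_scope.

Definition sphere_area (d : nat) : R :=
  match d with
  | 1%nat => 2
  | 2%nat => 2 * PI
  | 3%nat => 4 * PI
  | _ => 0
  end.

Definition p_exp (d : nat) : R :=
  match d with
  | 1%nat => 3
  | 2%nat => 2 * sqrt 2
  | 3%nat => (1 + sqrt 17) / 2
  | _ => 0
  end.

(* Radial profile of V^infty: V^infty(x) = 2(4-d)|x|^{-2}, r = |x|. *)
Definition Vinf (d : nat) (r : R) : R := 2 * (4 - INR d) / r ^ 2.

(* [IsVlam d lam v]: v : (0,oo) -> R is the radial profile of V^lam, i.e.
   V^lam(x) = v(|x|), where V^lam > 0 solves (1/2) Delta V = (1/2) V^2 - lam delta_0
   in the distributional sense on R^d.  For a positive radial function that is C^2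
   off 0 this is equivalent to:
   - v > 0 on (0,oo);
   - v'' + (d-1)/r v' = v^2 on (0,oo)  (the equation off the origin);
   - the flux condition |S^{d-1}| r^{d-1} v'(r) -> -2 lam as r -> 0+
     (the Dirac mass at 0; finiteness of the limit is equivalent to
     local integrability of V^2 near 0). *)
Definition IsVlam (d : nat) (lam : R) (v : R -> R) : Prop :=
  (forall r, 0 < r -> 0 < v r) /\
  exists v' v'' : R -> R,
    (forall r, 0 < r -> derivable_pt_lim v r (v' r)) /\
    (forall r, 0 < r -> derivable_pt_lim v' r (v'' r)) /\
    (forall r, 0 < r -> v'' r + (INR d - 1) / r * v' r = (v r) ^ 2) /\
    (forall eps, 0 < eps -> exists delta, 0 < delta /\
       forall r, 0 < r < delta ->
         Rabs (sphere_area d * r ^ (d - 1) * v' r + 2 * lam) < eps).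

(* Main.v *)
Require Import Defs.
From Stdlib Require Import Reals.
From Stdlib Require Import Lra Lia Psatz Classical.
From Coquelicot Require Import Coquelicot.
Open Scope R_scope.

Ltac nz := intro; repeat match goal with H: _ * _ = 0 |- _ => apply Rmult_integral in H; destruct H end; lra.


Lemma deriv_right_lt (f : R -> R) x l :
  derivable_pt_lim f x l -> l < 0 ->
  exists del, 0 < del /\ forall t, 0 < t < del -> f (x + t) < f x.
Proof.
  intros H Hl. destruct (H (- l / 2)) as [del Hd]; [lra|].
  exists del; split; [apply cond_pos|]. intros t [t0 t1].
  assert (A := Hd t ltac:(lra) ltac:(rewrite Rabs_right; lra)).
  apply Rabs_def2 in A. destruct A as [A1 A2].
  assert (B: (f (x + t) - f x) / t < 0) by lra.
  assert (C: f (x+t) - f x < 0).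
  { apply (Rmult_lt_reg_r (/ t)). apply Rinv_0_lt_compat; lra. unfold Rdiv in B. lra. }
  lra.
Qed.

Lemma deriv_left_lt (f : R -> R) x l :
  derivable_pt_lim f x l -> 0 < l ->
  exists del, 0 < del /\ forall t, 0 < t < del -> f (x - t) < f x.
Proof.
  intros H Hl. destruct (H (l / 2)) as [del Hd]; [lra|].
  exists del; split; [apply cond_pos|]. intros t [t0 t1].
  assert (A := Hd (-t) ltac:(lra) ltac:(rewrite Rabs_left; lra)).
  apply Rabs_def2 in A. destruct A as [A1 A2].
  assert (B: 0 < (f (x + - t) - f x) / (- t)) by lra.
  assert (C: 0 < (f (x + - t) - f x) * / (-t)) by (unfold Rdiv in B; lra).
  assert (D: f (x + - t) - f x < 0).
  { destruct (Rle_or_lt 0 (f (x + - t) - f x)) as [E|E]; auto.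
    exfalso. assert (0 < / t) by (apply Rinv_0_lt_compat; lra).
    rewrite <- Ropp_inv_permute in C by lra. nra. }
  replace (x - t) with (x + - t) by ring. lra.
Qed.

Lemma deriv_right_neg (f : R -> R) x l :
  derivable_pt_lim f x l -> f x = 0 -> l < 0 ->
  exists del, 0 < del /\ forall t, 0 < t < del -> f (x + t) < 0.
Proof.
  intros H E Hl. destruct (deriv_right_lt f x l H Hl) as [d [d0 Hd]].
  exists d; split; auto. intros t Ht. rewrite <- E. auto.
Qed.

Lemma MP (h h' h'' : R -> R) (a b x0 : R) :
  a <= x0 <= b ->
  (forall r, a <= r <= b -> derivable_pt_lim h r (h' r)) ->
  (forall r, a < r < b -> derivable_pt_lim h' r (h'' r)) ->
  h x0 < 0 ->
  (h' a < 0 \/ h x0 < h a) -> h x0 < h b ->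
  (forall r, a < r < b -> h r < 0 -> h' r = 0 -> h'' r < 0) -> False.
Proof.
  intros Hx Hd1 Hd2 Hneg Ha Hb Hsub.
  assert (Hab : a < b).
  { destruct (Req_dec x0 b) as [E|E]; [subst; lra|].
    lra. }
  destruct (continuity_ab_min h a b ltac:(lra)) as [c [Hc Hcab]].
  { intros r Hr. apply derivable_continuous_pt.
    exists (h' r). apply Hd1; auto. }
  assert (hc : h c <= h x0) by (apply Hc; lra).
  assert (cb : c <> b) by (intro; subst; lra).
  assert (ca : c <> a).
  { intro; subst c. destruct Ha as [Ha|Ha]; [|lra].
    destruct (deriv_right_lt h a (h' a) (Hd1 a ltac:(lra)) Ha) as [d [d0 Hd]].
    set (t := Rmin d (b - a) / 2).
    assert (0 < t < d) by (unfold t; unfold Rmin; destruct Rle_dec; lra).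
    assert (t <= b - a) by (unfold t; unfold Rmin; destruct Rle_dec; lra).
    specialize (Hd t H). specialize (Hc (a + t) ltac:(lra)). lra. }
  assert (Hint : a < c < b) by lra.
  assert (Hd0 : h' c = 0).
  { destruct (Rtotal_order (h' c) 0) as [L|[L|L]]; auto; exfalso.
    - destruct (deriv_right_lt h c (h' c) (Hd1 c ltac:(lra)) L) as [d [d0 Hd]].
      set (t := Rmin d (b - c) / 2).
      assert (0 < t < d) by (unfold t; unfold Rmin; destruct Rle_dec; lra).
      assert (t <= b - c) by (unfold t; unfold Rmin; destruct Rle_dec; lra).
      specialize (Hd t H). specialize (Hc (c + t) ltac:(lra)). lra.
    - destruct (deriv_left_lt h c (h' c) (Hd1 c ltac:(lra)) L) as [d [d0 Hd]].
      set (t := Rmin d (c - a) / 2).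
      assert (0 < t < d) by (unfold t; unfold Rmin; destruct Rle_dec; lra).
      assert (t <= c - a) by (unfold t; unfold Rmin; destruct Rle_dec; lra).
      specialize (Hd t H). specialize (Hc (c - t) ltac:(lra)). lra. }
  assert (Hh2 := Hsub c Hint ltac:(lra) Hd0).
  destruct (deriv_right_neg h' c (h'' c) (Hd2 c Hint) Hd0 Hh2) as [d [d0 Hd]].
  set (t := Rmin d (b - c) / 2).
  assert (Ht : 0 < t < d) by (unfold t; unfold Rmin; destruct Rle_dec; lra).
  assert (Ht2 : t <= b - c) by (unfold t; unfold Rmin; destruct Rle_dec; lra).
  destruct (MVT_cor2 h h' c (c + t) ltac:(lra)) as [xi [E Hxi]].
  { intros r Hr. apply Hd1. lra. }
  assert (h' xi < 0).
  { replace xi with (c + (xi - c)) by ring. apply Hd. lra. }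
  specialize (Hc (c + t) ltac:(lra)).
  assert (h' xi * (c + t - c) < 0) by (replace (c+t-c) with t by ring; nra).
  lra.
Qed.



Definition Sol (k : R) (v v' v'' : R -> R) : Prop :=
  (forall r, 0 < r -> 0 < v r) /\
  (forall r, 0 < r -> derivable_pt_lim v r (v' r)) /\
  (forall r, 0 < r -> derivable_pt_lim v' r (v'' r)) /\
  (forall r, 0 < r -> v'' r + k / r * v' r = v r ^ 2).

Lemma KO k v v' v'' : 0 <= k <= 2 -> Sol k v v' v'' ->
  forall r, 0 < r -> v r <= 180 / r ^ 2.
Proof.
  intros Hk [Hpos [Hd1 [Hd2 Hode]]] r Hr.
  set (t1 := 2 * r / 3). set (t2 := 4 * r / 3).
  set (S := fun x => 10 / (x - t1)^2 + 10 / (t2 - x)^2).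
  set (S' := fun x => -20 / (x - t1)^3 + 20 / (t2 - x)^3).
  set (S'' := fun x => 60 / (x - t1)^4 + 60 / (t2 - x)^4).
  assert (dS : forall x, t1 < x < t2 -> derivable_pt_lim S x (S' x)).
  { intros x Hx. apply is_derive_Reals. unfold S, S'. auto_derive.
    - repeat split; try nz.
    - field. split; nra. }
  assert (dS' : forall x, t1 < x < t2 -> derivable_pt_lim S' x (S'' x)).
  { intros x Hx. apply is_derive_Reals. unfold S', S''. auto_derive.
    - repeat split; try nz.
    - field. split; nra. }
  destruct (Rle_or_lt (v r) (180 / r^2)) as [E|E]; auto. exfalso.
  destruct (continuity_ab_maj v t1 t2 ltac:(unfold t1,t2; lra)) as [xm [HM Hxm]].
  { intros c Hc. apply derivable_continuous_pt. exists (v' c). apply Hd1.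
    unfold t1 in Hc. lra. }
  set (M := v xm).
  assert (HM0 : 0 < M) by (apply Hpos; unfold t1 in Hxm; lra).
  set (eta := Rmin (r / 6) (1 / (M + 1))).
  assert (He1 : 0 < eta) by (unfold eta, Rmin; destruct Rle_dec;
     [lra| apply Rdiv_lt_0_compat; lra]).
  assert (He2 : eta <= r / 6) by (unfold eta; apply Rmin_l).
  assert (He3 : eta <= 1 / (M + 1)) by (unfold eta; apply Rmin_r).
  assert (Hbig : M < 10 / eta ^ 2).
  { assert (eta * (M + 1) <= 1).
    { apply (Rmult_le_reg_r (/ (M+1))). apply Rinv_0_lt_compat; lra.
      rewrite Rmult_assoc, Rinv_r by lra. unfold Rdiv in He3; lra. }
    apply (Rmult_lt_reg_r (eta^2)). nra. unfold Rdiv.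
    rewrite Rmult_assoc, Rinv_l by (apply pow_nonzero; lra). nra. }
  assert (HS0 : forall x, t1 < x < t2 -> 0 < 10 / (x - t1)^2 /\ 0 < 10 / (t2 - x)^2).
  { intros x Hx. split; apply Rdiv_lt_0_compat; try lra; apply pow_lt; lra. }
  assert (HSr : S r = 180 / r^2).
  { unfold S. replace (r - t1) with (r/3) by (unfold t1; field).
    replace (t2 - r) with (r/3) by (unfold t2; field). field; lra. }
  apply (MP (fun x => S x - v x) (fun x => S' x - v' x) (fun x => S'' x - v'' x)
           (t1 + eta) (t2 - eta) r).
  - unfold t1, t2; lra.
  - intros x Hx. apply derivable_pt_lim_minus. apply dS; unfold t1,t2 in *; lra.
    apply Hd1. unfold t1 in *; lra.
  - intros x Hx. apply derivable_pt_lim_minus. apply dS'; unfold t1,t2 in *; lra.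
    apply Hd2. unfold t1 in *; lra.
  - cbv beta. lra.
  - right. cbv beta. rewrite HSr. unfold S. replace (t1 + eta - t1) with eta by ring.
    assert (v (t1 + eta) <= M) by (apply HM; unfold t1,t2; lra).
    assert (0 < 10 / (t2 - (t1 + eta))^2) by (apply HS0; unfold t1,t2; lra).
    assert (0 < 180 / r^2) by (apply Rdiv_lt_0_compat; [lra|apply pow_lt; lra]).
    lra.
  - cbv beta. rewrite HSr. unfold S. replace (t2 - (t2 - eta)) with eta by ring.
    assert (v (t2 - eta) <= M) by (apply HM; unfold t1,t2; lra).
    assert (0 < 10 / (t2 - eta - t1)^2) by (apply HS0; unfold t1,t2; lra).
    assert (0 < 180 / r^2) by (apply Rdiv_lt_0_compat; [lra|apply pow_lt; lra]).
    lra.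
  - intros x Hx Hneg Hd0. cbv beta in *.
    assert (Hx0 : 0 < x) by (unfold t1 in Hx; lra).
    assert (Hx' : t1 < x < t2) by lra.
    assert (Ev : v'' x = v x ^ 2 - k / x * v' x) by (rewrite <- (Hode x Hx0); ring).
    assert (Ev' : v' x = S' x) by lra.
    rewrite Ev, Ev'.
    set (X := x - t1) in *. set (Y := t2 - x) in *.
    assert (HX : 0 < X) by (unfold X; lra). assert (HY : 0 < Y) by (unfold Y; lra).
    assert (HYx : Y < x) by (unfold Y, t2, t1 in *; lra).
    assert (HSv : S x < v x) by lra.
    assert (HS0' : 0 < S x) by (destruct (HS0 x Hx'); unfold S; lra).
    assert (Key : S'' x + k / x * S' x <= S x ^ 2).
    { unfold S, S', S''. fold X Y.
      set (A := / X). set (B := / Y).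
      assert (HA : 0 < A) by (apply Rinv_0_lt_compat; lra).
      assert (HB : 0 < B) by (apply Rinv_0_lt_compat; lra).
      assert (HBx : / x <= B) by (apply Rinv_le_contravar; lra).
      assert (Hix : 0 < / x) by (apply Rinv_0_lt_compat; lra).
      replace (60 / X ^ 4 + 60 / Y ^ 4 + k / x * (-20 / X ^ 3 + 20 / Y ^ 3))
        with (60 * A^4 + 60 * B^4 - 20 * k * / x * A^3 + 20 * k * / x * B^3)
        by (unfold A, B; field; lra).
      replace ((10 / X ^ 2 + 10 / Y ^ 2) ^ 2) with ((10 * A^2 + 10 * B^2)^2)
        by (unfold A, B; field; lra).
      assert (0 <= k * / x * A^3) by (apply Rmult_le_pos; [apply Rmult_le_pos; lra| apply pow_le; lra]).
      assert (k * / x * B^3 <= 2 * B * B^3).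
      { apply Rmult_le_compat_r. apply pow_le; lra. nra. }
      assert (0 <= A^2 * B^2) by (apply Rmult_le_pos; apply pow_le; lra).
      nra. }
    nra.
Qed.


Lemma sphere_pos d : (1 <= d <= 3)%nat -> 0 < sphere_area d.
Proof.
  intros Hd. assert (PI_RGT_0 := PI_RGT_0).
  destruct d as [|[|[|[|]]]]; simpl; try lia; lra.
Qed.

Lemma k_bounds d : (1 <= d <= 3)%nat -> 0 <= INR d - 1 <= 2.
Proof. intros Hd. destruct d as [|[|[|[|]]]]; simpl; try lia; lra. Qed.



Lemma y_deriv d v v' v'' r : (1 <= d <= 3)%nat -> 0 < r ->
  Sol (INR d - 1) v v' v'' ->
  derivable_pt_lim (fun x => x ^ (d - 1) * v' x) r (r ^ (d - 1) * v r ^ 2).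
Proof.
  intros Hd Hr [Hp [H1 [H2 Ho]]].
  replace (r ^ (d - 1) * v r ^ 2) with
    (INR (d - 1) * r ^ pred (d - 1) * v' r + r ^ (d - 1) * v'' r).
  - apply derivable_pt_lim_mult. apply derivable_pt_lim_pow. apply H2; auto.
  - rewrite <- (Ho r Hr).
    destruct d as [|[|[|[|]]]]; try lia; simpl; field; lra.
Qed.

Lemma y_incr d v v' v'' t r : (1 <= d <= 3)%nat -> 0 < t -> t < r ->
  Sol (INR d - 1) v v' v'' -> t ^ (d - 1) * v' t < r ^ (d - 1) * v' r.
Proof.
  intros Hd Ht Htr Hs.
  destruct (MVT_cor2 (fun x => x ^ (d - 1) * v' x) (fun x => x ^ (d - 1) * v x ^ 2) t r Htr)
    as [c [E Hc]].
  { intros c Hc. apply (y_deriv d v v' v''); auto; lra. }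
  destruct Hs as [Hp _].
  assert (0 < c ^ (d - 1) * v c ^ 2).
  { apply Rmult_lt_0_compat. apply pow_lt; lra. apply pow_lt. apply Hp; lra. }
  cbv beta in E. nra.
Qed.

Lemma flux_lower d lam v v' v'' : (1 <= d <= 3)%nat ->
  Sol (INR d - 1) v v' v'' ->
  (forall eps, 0 < eps -> exists delta, 0 < delta /\
       forall r, 0 < r < delta ->
         Rabs (sphere_area d * r ^ (d - 1) * v' r + 2 * lam) < eps) ->
  forall r, 0 < r -> - 2 * lam <= sphere_area d * r ^ (d - 1) * v' r.
Proof.
  intros Hd Hs Hf r Hr.
  assert (HS := sphere_pos d Hd).
  destruct (Rle_or_lt (- 2 * lam) (sphere_area d * r ^ (d - 1) * v' r)) as [E|E]; auto.
  exfalso.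
  destruct (Hf (- 2 * lam - sphere_area d * r ^ (d - 1) * v' r)) as [del [Hdel Hd2]]; [lra|].
  set (t := Rmin del r / 2).
  assert (Ht : 0 < t < del) by (unfold t, Rmin; destruct Rle_dec; lra).
  assert (Ht2 : t < r) by (unfold t, Rmin; destruct Rle_dec; lra).
  specialize (Hd2 t Ht). apply Rabs_def2 in Hd2.
  assert (Hy := y_incr d v v' v'' t r Hd ltac:(lra) Ht2 Hs).
  assert (sphere_area d * (t ^ (d - 1) * v' t) < sphere_area d * (r ^ (d - 1) * v' r))
    by (apply Rmult_lt_compat_l; auto).
  lra.
Qed.


Lemma MP_half (h h' h'' : R -> R) (R1 : R) :
  (forall r, R1 <= r -> derivable_pt_lim h r (h' r)) ->
  (forall r, R1 < r -> derivable_pt_lim h' r (h'' r)) ->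
  0 <= h R1 ->
  (forall m, 0 < m -> exists b, forall r, b <= r -> - m < h r) ->
  (forall r, R1 < r -> h r < 0 -> h' r = 0 -> h'' r < 0) ->
  forall r, R1 <= r -> 0 <= h r.
Proof.
  intros H1 H2 H0 Hdec Hsub x0 Hx0.
  destruct (Rle_or_lt 0 (h x0)) as [E|E]; auto. exfalso.
  destruct (Hdec (- h x0)) as [b0 Hb0]; [lra|].
  set (b := Rmax b0 (x0 + 1)).
  assert (b0 <= b) by apply Rmax_l. assert (x0 + 1 <= b) by apply Rmax_r.
  apply (MP h h' h'' R1 b x0); auto; try lra.
  - intros r Hr. apply H1; lra.
  - intros r Hr. apply H2; lra.
  - specialize (Hb0 b ltac:(lra)). lra.
  - intros r Hr. apply Hsub. lra.
Qed.

Lemma MP_zero (h h' h'' : R -> R) :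
  (forall r, 0 < r -> derivable_pt_lim h r (h' r)) ->
  (forall r, 0 < r -> derivable_pt_lim h' r (h'' r)) ->
  (exists del, 0 < del /\ forall r, 0 < r < del -> h' r < 0) ->
  (forall m, 0 < m -> exists b, forall r, b <= r -> - m < h r) ->
  (forall r, 0 < r -> h r < 0 -> h' r = 0 -> h'' r < 0) ->
  forall r, 0 < r -> 0 <= h r.
Proof.
  intros H1 H2 [del [Hdel Hn]] Hdec Hsub x0 Hx0.
  destruct (Rle_or_lt 0 (h x0)) as [E|E]; auto. exfalso.
  destruct (Hdec (- h x0)) as [b0 Hb0]; [lra|].
  set (b := Rmax b0 (x0 + 1)).
  assert (b0 <= b) by apply Rmax_l. assert (x0 + 1 <= b) by apply Rmax_r.
  set (al := Rmin del x0 / 2).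
  assert (Hal : 0 < al < del) by (unfold al, Rmin; destruct Rle_dec; lra).
  assert (Hal2 : al < x0) by (unfold al, Rmin; destruct Rle_dec; lra).
  apply (MP h h' h'' al b x0).
  - lra.
  - intros r Hr. apply H1; lra.
  - intros r Hr. apply H2; lra.
  - lra.
  - left. apply Hn. lra.
  - specialize (Hb0 b ltac:(lra)). lra.
  - intros r Hr. apply Hsub. lra.
Qed.

Lemma dpow (al x : R) : 0 < x ->
  derivable_pt_lim (fun x => Rpower x al) x (al * Rpower x al / x).
Proof.
  intros Hx. replace (al * Rpower x al / x) with (al * Rpower x (al - 1)).
  apply derivable_pt_lim_power; auto.
  unfold Rminus. rewrite Rpower_plus, Rpower_Ropp, Rpower_1 by auto. field. lra.
Qed.

Lemma dpow2 (c al x : R) : 0 < x ->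
  derivable_pt_lim (fun x => c * Rpower x al / x) x (c * (al - 1) * Rpower x al / x ^ 2).
Proof.
  intros Hx.
  assert (H := derivable_pt_lim_div (fun x => c * Rpower x al) id x
     (c * (al * Rpower x al / x)) 1
     ltac:(apply derivable_pt_lim_scal; apply dpow; auto)
     (derivable_pt_lim_id x) ltac:(unfold id; lra)).
  replace (c * (al - 1) * Rpower x al / x ^ 2) with
    ((c * (al * Rpower x al / x) * id x - 1 * (c * Rpower x al)) / Rsqr (id x))
    by (unfold id, Rsqr; field; lra).
  exact H.
Qed.

Lemma Rpower_pos x y : 0 < Rpower x y.
Proof. unfold Rpower. apply exp_pos. Qed.

Lemma decay_pow (K q : R) : 1 <= q ->
  forall m, 0 < m -> exists b, 1 <= b /\ forall r, b <= r -> K * Rpower r (- q) < m.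
Proof.
  intros Hq m Hm.
  exists (1 + Rabs K / m). split.
  { assert (0 <= Rabs K / m) by (apply Rmult_le_pos; [apply Rabs_pos|left; apply Rinv_0_lt_compat; lra]). lra. }
  intros r Hr.
  assert (0 <= Rabs K / m) by (apply Rmult_le_pos; [apply Rabs_pos|left; apply Rinv_0_lt_compat; lra]).
  assert (Hr1 : 1 <= r) by lra.
  assert (E : Rpower r (- q) <= Rpower r (Ropp 1)) by (apply Rle_Rpower; lra).
  rewrite (Rpower_Ropp r 1), Rpower_1 in E by lra.
  assert (Hp := Rpower_pos r (- q)).
  assert (K * Rpower r (- q) <= Rabs K * Rpower r (- q)).
  { apply Rmult_le_compat_r; [lra| apply Rle_abs]. }
  assert (Rabs K * Rpower r (- q) <= Rabs K * / r).
  { apply Rmult_le_compat_l; [apply Rabs_pos| lra]. }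
  assert (Rabs K * / r < m).
  { apply (Rmult_lt_reg_r r); [lra|]. rewrite Rmult_assoc, Rinv_l by lra.
    assert (Rabs K = (Rabs K / m) * m) by (field; lra). nra. }
  lra.
Qed.



Lemma Rpower_m2 r : 0 < r -> Rpower r (Ropp 2) = / r ^ 2.
Proof.
  intros Hr. rewrite Rpower_Ropp. replace 2 with (INR 2) at 1 by (simpl; ring).
  rewrite Rpower_pow by auto. auto.
Qed.

Lemma decay_inv2 (K : R) : forall m, 0 < m -> exists b, forall r, b <= r -> K / r ^ 2 < m.
Proof.
  intros m Hm. destruct (decay_pow K 2 ltac:(lra) m Hm) as [b [Hb1 Hb]].
  exists b. intros r Hr. specialize (Hb r Hr). rewrite Rpower_m2 in Hb by lra. exact Hb.
Qed.

Lemma dVinf d x : 0 < x -> derivable_pt_lim (Vinf d) x (- 4 * (4 - INR d) / x ^ 3).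
Proof.
  intros Hx. apply is_derive_Reals. unfold Vinf. auto_derive.
  - repeat split; try nz.
  - field. nz.
Qed.

Lemma dVinf' d x : 0 < x -> derivable_pt_lim (fun x => - 4 * (4 - INR d) / x ^ 3) x (12 * (4 - INR d) / x ^ 4).
Proof.
  intros Hx. apply is_derive_Reals. auto_derive.
  - repeat split; try nz.
  - field. nz.
Qed.

Lemma Lw_id d (v v' v'' : R -> R) x : 0 < x -> v'' x + (INR d - 1) / x * v' x = v x ^ 2 ->
  (12 * (4 - INR d) / x ^ 4 - v'' x) + (INR d - 1) / x * (- 4 * (4 - INR d) / x ^ 3 - v' x)
  = (2 * Vinf d x - (Vinf d x - v x)) * (Vinf d x - v x).
Proof.
  intros Hx Ho.
  replace (12 * (4 - INR d) / x ^ 4 - v'' x + (INR d - 1) / x * (- 4 * (4 - INR d) / x ^ 3 - v' x))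
    with (4 * (4 - INR d) ^ 2 / x ^ 4 - (v'' x + (INR d - 1) / x * v' x)) by (field; lra).
  rewrite Ho. unfold Vinf. field. lra.
Qed.

Lemma Vinf_pos d x : (1 <= d <= 3)%nat -> 0 < x -> 0 < Vinf d x.
Proof.
  intros Hd Hx. unfold Vinf. assert (INR d <= 3).
  { replace 3 with (INR 3) by (simpl; ring). apply le_INR. lia. }
  apply Rdiv_lt_0_compat. lra. apply pow_lt; lra.
Qed.

Lemma near0_neg d lam v' : (1 <= d <= 3)%nat -> 0 < lam ->
  (forall r, 0 < r -> - 2 * lam <= sphere_area d * r ^ (d - 1) * v' r) ->
  exists del, 0 < del /\ forall r, 0 < r < del -> - 4 * (4 - INR d) / r ^ 3 - v' r < 0.
Proof.
  intros Hd Hl Hf. assert (HS := sphere_pos d Hd).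
  set (a := 2 * (4 - INR d)).
  assert (Ha : 2 <= a).
  { unfold a. assert (INR d <= 3) by (replace 3 with (INR 3) by (simpl; ring); apply le_INR; lia). lra. }
  set (del := Rmin 1 (a * sphere_area d / (2 * lam))).
  assert (Hq : 0 < a * sphere_area d / (2 * lam)) by (apply Rdiv_lt_0_compat; nra).
  exists del. split. { unfold del, Rmin; destruct Rle_dec; lra. }
  intros r [Hr0 Hr1].
  assert (Hr2 : r < 1) by (unfold del in Hr1; generalize (Rmin_l 1 (a * sphere_area d / (2 * lam))); lra).
  assert (Hr3 : r * (2 * lam) < a * sphere_area d).
  { assert (r < a * sphere_area d / (2 * lam)) by
      (unfold del in Hr1; generalize (Rmin_r 1 (a * sphere_area d / (2 * lam))); lra).
    apply (Rmult_lt_compat_r (2 * lam)) in H; [|lra].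
    unfold Rdiv in H. rewrite Rmult_assoc, Rinv_l in H by lra. lra. }
  specialize (Hf r Hr0).
  replace (- 4 * (4 - INR d) / r ^ 3) with (- 2 * a / r ^ 3) by (unfold a; field; lra).
  assert (Hp : 0 < r ^ (d - 1)) by (apply pow_lt; lra).
  assert (Hm : 0 < sphere_area d * r ^ (d - 1) * r ^ 3) by
    (apply Rmult_lt_0_compat; [nra| apply pow_lt; lra]).
  apply (Rmult_lt_reg_r (sphere_area d * r ^ (d - 1) * r ^ 3)); auto.
  rewrite Rmult_0_l.
  replace ((- 2 * a / r ^ 3 - v' r) * (sphere_area d * r ^ (d - 1) * r ^ 3))
    with (- 2 * a * sphere_area d * r ^ (d - 1) - r ^ 3 * (sphere_area d * r ^ (d - 1) * v' r))
    by (field; lra).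
  assert (- r ^ 3 * (sphere_area d * r ^ (d - 1) * v' r) <= 2 * lam * r ^ 3).
  { assert (0 < r ^ 3) by (apply pow_lt; lra). nra. }
  assert (2 * lam * r ^ 3 < 2 * a * sphere_area d * r ^ (d - 1)).
  { assert (H6: r * (2*lam) * (r*r) < a*sphere_area d*(r*r)) by (apply Rmult_lt_compat_r; nra).
    assert (H7 : 0 < a*sphere_area d) by nra. assert (H8 : r * r < r) by nra.
    clear -H6 H7 H8 Hr0 Hr2 Hd Hl. generalize dependent (sphere_area d). intros.
    destruct d as [|[|[|[|]]]]; try lia; simpl; nra. }
  lra.
Qed.

Lemma below_inf d lam v v' v'' : (1 <= d <= 3)%nat -> 0 < lam ->
  Sol (INR d - 1) v v' v'' ->
  (forall r, 0 < r -> - 2 * lam <= sphere_area d * r ^ (d - 1) * v' r) ->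
  forall r, 0 < r -> v r <= Vinf d r.
Proof.
  intros Hd Hl Hs Hf r Hr.
  assert (Hk := k_bounds d Hd).
  assert (HKO := KO _ v v' v'' Hk Hs).
  destruct Hs as [Hp [H1 [H2 Ho]]].
  cut (0 <= Vinf d r - v r); [lra|].
  apply (MP_zero (fun x => Vinf d x - v x) (fun x => - 4 * (4 - INR d) / x ^ 3 - v' x)
     (fun x => 12 * (4 - INR d) / x ^ 4 - v'' x)); auto.
  - intros x Hx. apply derivable_pt_lim_minus; [apply dVinf | apply H1]; auto.
  - intros x Hx. apply derivable_pt_lim_minus; [apply dVinf' | apply H2]; auto.
  - apply (near0_neg d lam v'); auto.
  - intros m Hm. destruct (decay_inv2 180 m Hm) as [b Hb]. exists (Rmax b 1).
    intros x Hx. assert (b <= x) by (generalize (Rmax_l b 1); lra).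
    assert (0 < x) by (generalize (Rmax_r b 1); lra).
    specialize (Hb x H). specialize (HKO x H0). assert (Hv := Vinf_pos d x Hd H0). lra.
  - intros x Hx Hneg Hd0. cbv beta in *.
    assert (E := Lw_id d v v' v'' x Hx (Ho x Hx)).
    rewrite Hd0, Rmult_0_r, Rplus_0_r in E. rewrite E.
    assert (Hv := Vinf_pos d x Hd Hx). assert (0 < v x) by auto. nra.
Qed.


Definition W d (v : R -> R) x := Vinf d x - v x.

Lemma W_derivs d v v' v'' : Sol (INR d - 1) v v' v'' ->
  (forall x, 0 < x -> derivable_pt_lim (W d v) x (- 4 * (4 - INR d) / x ^ 3 - v' x)) /\
  (forall x, 0 < x -> derivable_pt_lim (fun x => - 4 * (4 - INR d) / x ^ 3 - v' x) x
                        (12 * (4 - INR d) / x ^ 4 - v'' x)).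
Proof.
  intros [Hp [H1 [H2 Ho]]]. split; intros x Hx.
  - apply derivable_pt_lim_minus; [apply dVinf | apply H1]; auto.
  - apply derivable_pt_lim_minus; [apply dVinf' | apply H2]; auto.
Qed.

Lemma upper_cmp d v v' v'' R1 (P P' P'' : R -> R) : (1 <= d <= 3)%nat ->
  Sol (INR d - 1) v v' v'' -> 0 < R1 ->
  (forall x, R1 <= x -> derivable_pt_lim P x (P' x)) ->
  (forall x, R1 < x -> derivable_pt_lim P' x (P'' x)) ->
  W d v R1 <= P R1 ->
  (forall x, R1 <= x -> 0 <= P x) ->
  (forall x, R1 < x -> P'' x + (INR d - 1) / x * P' x <= (2 * Vinf d x - W d v x) * P x) ->
  forall x, R1 <= x -> W d v x <= P x.
Proof.
  intros Hd Hs HR dP dP' H0 Hpos Hsup x Hx.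
  destruct (W_derivs d v v' v'' Hs) as [dW dW'].
  assert (Hs' := Hs). destruct Hs' as [Hp [_ [_ Ho]]].
  cut (0 <= P x - W d v x); [lra|].
  apply (MP_half (fun x => P x - W d v x) (fun x => P' x - (- 4 * (4 - INR d) / x ^ 3 - v' x))
     (fun x => P'' x - (12 * (4 - INR d) / x ^ 4 - v'' x)) R1); auto; try lra.
  - intros r Hr. apply derivable_pt_lim_minus; auto. apply dW; lra.
  - intros r Hr. apply derivable_pt_lim_minus; auto. apply dW'; lra.
  - intros m Hm. destruct (decay_inv2 (2 * (4 - INR d)) m Hm) as [b Hb].
    exists (Rmax b (R1 + 1)). intros r Hr.
    assert (b <= r) by (generalize (Rmax_l b (R1+1)); lra).
    assert (R1 + 1 <= r) by (generalize (Rmax_r b (R1+1)); lra).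
    specialize (Hb r H). specialize (Hpos r ltac:(lra)). assert (0 < v r) by (apply Hp; lra).
    unfold W, Vinf in *. lra.
  - intros r Hr Hneg Hd0. cbv beta in *.
    assert (Hr0 : 0 < r) by lra.
    assert (E := Lw_id d v v' v'' r Hr0 (Ho r Hr0)). fold (W d v r) in E.
    specialize (Hsup r Hr).
    assert (Ep : P' r = - 4 * (4 - INR d) / r ^ 3 - v' r) by lra.
    rewrite Ep in Hsup.
    assert (Hv := Vinf_pos d r Hd Hr0). assert (0 < v r) by auto.
    assert (Hc : 0 < 2 * Vinf d r - W d v r) by (unfold W; lra).
    assert (P'' r - (12 * (4 - INR d) / r ^ 4 - v'' r) <= (2 * Vinf d r - W d v r) * (P r - W d v r)) by lra.
    nra.
Qed.

Lemma lower_cmp d v v' v'' R1 (P P' P'' : R -> R) : (1 <= d <= 3)%nat ->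
  Sol (INR d - 1) v v' v'' -> 0 < R1 ->
  (forall x, R1 <= x -> 0 <= W d v x) ->
  (forall x, R1 <= x -> derivable_pt_lim P x (P' x)) ->
  (forall x, R1 < x -> derivable_pt_lim P' x (P'' x)) ->
  P R1 <= W d v R1 ->
  (forall m, 0 < m -> exists b, forall x, b <= x -> P x < m) ->
  (forall x, R1 < x -> 2 * Vinf d x * P x <= P'' x + (INR d - 1) / x * P' x) ->
  forall x, R1 <= x -> P x <= W d v x.
Proof.
  intros Hd Hs HR Hw dP dP' H0 Hdec Hsub x Hx.
  destruct (W_derivs d v v' v'' Hs) as [dW dW'].
  assert (Hs' := Hs). destruct Hs' as [Hp [_ [_ Ho]]].
  cut (0 <= W d v x - P x); [lra|].
  apply (MP_half (fun x => W d v x - P x) (fun x => (- 4 * (4 - INR d) / x ^ 3 - v' x) - P' x)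
     (fun x => (12 * (4 - INR d) / x ^ 4 - v'' x) - P'' x) R1); auto; try lra.
  - intros r Hr. apply derivable_pt_lim_minus; auto. apply dW; lra.
  - intros r Hr. apply derivable_pt_lim_minus; auto. apply dW'; lra.
  - intros m Hm. destruct (Hdec m Hm) as [b Hb].
    exists (Rmax b R1). intros r Hr.
    assert (b <= r) by (generalize (Rmax_l b R1); lra).
    assert (R1 <= r) by (generalize (Rmax_r b R1); lra).
    specialize (Hb r H). specialize (Hw r H1). lra.
  - intros r Hr Hneg Hd0. cbv beta in *.
    assert (Hr0 : 0 < r) by lra.
    assert (E := Lw_id d v v' v'' r Hr0 (Ho r Hr0)). fold (W d v r) in E.
    specialize (Hsub r Hr).
    assert (Ep : P' r = - 4 * (4 - INR d) / r ^ 3 - v' r) by lra.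
    rewrite Ep in Hsub.
    assert (Hv := Vinf_pos d r Hd Hr0).
    assert (12 * (4 - INR d) / r ^ 4 - v'' r - P'' r <= 2 * Vinf d r * (W d v r - P r) - W d v r ^ 2) by nra.
    nra.
Qed.

Lemma dpsi c q x : 0 < x ->
  derivable_pt_lim (fun x => c * Rpower x (- q)) x (c * (- q) * Rpower x (- q) / x).
Proof.
  intros Hx. replace (c * (- q) * Rpower x (- q) / x) with (c * ((- q) * Rpower x (- q) / x)) by (field; lra).
  apply derivable_pt_lim_scal. apply dpow; auto.
Qed.

Lemma dpsi' c q x : 0 < x ->
  derivable_pt_lim (fun x => c * (- q) * Rpower x (- q) / x) x (c * q * (q + 1) * Rpower x (- q) / x ^ 2).
Proof.
  intros Hx. replace (c * q * (q + 1) * Rpower x (- q) / x ^ 2) with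
    ((c * (- q)) * (- q - 1) * Rpower x (- q) / x ^ 2) by (field; lra).
  apply dpow2; auto.
Qed.

Lemma Lpsi k c q x : 0 < x ->
  c * q * (q + 1) * Rpower x (- q) / x ^ 2 + k / x * (c * (- q) * Rpower x (- q) / x)
  = (q ^ 2 - (k - 1) * q) / x ^ 2 * (c * Rpower x (- q)).
Proof. intros Hx. field. lra. Qed.

Lemma p_facts d : (1 <= d <= 3)%nat ->
  1 <= p_exp d /\ p_exp d ^ 2 - (INR d - 2) * p_exp d = 4 * (4 - INR d).
Proof.
  intros Hd.
  assert (s2 := sqrt_sqrt 2 ltac:(lra)). assert (s17 := sqrt_sqrt 17 ltac:(lra)).
  assert (p2 := sqrt_pos 2). assert (p17 := sqrt_pos 17).
  destruct d as [|[|[|[|]]]]; try lia; simpl; split; try nra.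
Qed.


Lemma lower_p d lam v v' v'' : (1 <= d <= 3)%nat -> 0 < lam ->
  Sol (INR d - 1) v v' v'' ->
  (forall r, 0 < r -> - 2 * lam <= sphere_area d * r ^ (d - 1) * v' r) ->
  forall R1 r, 0 < R1 -> R1 <= r ->
  Rpower R1 (p_exp d) / Rpower r (p_exp d) * W d v R1 <= W d v r.
Proof.
  intros Hd Hl Hs Hf R1 r HR Hr.
  assert (Hw : forall x, 0 < x -> 0 <= W d v x).
  { intros x Hx. unfold W. assert (H := below_inf d lam v v' v'' Hd Hl Hs Hf x Hx). lra. }
  destruct (p_facts d Hd) as [Hp1 Hp2].
  set (p := p_exp d) in *.
  set (K := W d v R1 * Rpower R1 p).
  replace (Rpower R1 p / Rpower r p * W d v R1) with (K * Rpower r (- p)).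
  2:{ unfold K. rewrite Rpower_Ropp. assert (H := Rpower_pos r p). field. lra. }
  apply (lower_cmp d v v' v'' R1 (fun x => K * Rpower x (- p))
     (fun x => K * (- p) * Rpower x (- p) / x)
     (fun x => K * p * (p + 1) * Rpower x (- p) / x ^ 2)); auto.
  - intros x Hx. apply Hw. lra.
  - intros x Hx. apply dpsi. lra.
  - intros x Hx. apply dpsi'. lra.
  - unfold K. rewrite Rpower_Ropp. assert (H := Rpower_pos R1 p). right. field. lra.
  - intros m Hm. destruct (decay_pow K p Hp1 m Hm) as [b [_ Hb]]. exists b. auto.
  - intros x Hx. rewrite Lpsi by lra.
    replace (INR d - 1 - 1) with (INR d - 2) by ring. rewrite Hp2.
    unfold Vinf. right. field. lra.
Qed.

Lemma W_pos d lam v v' v'' : (1 <= d <= 3)%nat -> 0 < lam ->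
  Sol (INR d - 1) v v' v'' ->
  (forall r, 0 < r -> - 2 * lam <= sphere_area d * r ^ (d - 1) * v' r) ->
  forall R1, 0 < R1 -> 0 < W d v R1.
Proof.
  intros Hd Hl Hs Hf R1 HR.
  assert (Hw : forall x, 0 < x -> 0 <= W d v x).
  { intros x Hx. unfold W. assert (H := below_inf d lam v v' v'' Hd Hl Hs Hf x Hx). lra. }
  destruct (near0_neg d lam v' Hd Hl Hf) as [del [Hdel Hn]].
  set (R2 := Rmin R1 del / 2).
  assert (H2 : 0 < R2 < del) by (unfold R2, Rmin; destruct Rle_dec; lra).
  assert (H3 : R2 < R1) by (unfold R2, Rmin; destruct Rle_dec; lra).
  set (R3 := R2 * 3 / 2).
  assert (H4 : R3 < del) by (unfold R3, R2, Rmin in *; destruct Rle_dec; lra).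
  destruct (W_derivs d v v' v'' Hs) as [dW _].
  destruct (MVT_cor2 (W d v) (fun x => - 4 * (4 - INR d) / x ^ 3 - v' x) R2 R3) as [c [E Hc]].
  { unfold R3; lra. }
  { intros c Hc. apply dW. lra. }
  assert (Hnc := Hn c ltac:(lra)).
  assert (W d v R3 >= 0) by (apply Rle_ge; apply Hw; unfold R3; lra).
  assert (HW2 : 0 < W d v R2) by (unfold R3 in *; nra).
  assert (L := lower_p d lam v v' v'' Hd Hl Hs Hf R2 R1 ltac:(lra) ltac:(lra)).
  assert (0 < Rpower R2 (p_exp d) / Rpower R1 (p_exp d)).
  { apply Rdiv_lt_0_compat; apply Rpower_pos. }
  nra.
Qed.


Lemma D_le3 d : (1 <= d <= 3)%nat -> 1 <= INR d <= 3.
Proof. intros Hd. destruct d as [|[|[|[|]]]]; try lia; simpl; lra. Qed.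

Lemma upper_b1 d v v' v'' R0 : (1 <= d <= 3)%nat ->
  Sol (INR d - 1) v v' v'' -> 0 < R0 ->
  (forall x, 0 < x -> 0 <= W d v x) ->
  (forall x, R0 <= x -> W d v x <= Vinf d x / 10) ->
  forall x, R0 <= x -> W d v x <= W d v R0 * Rpower R0 (5/2) * Rpower x (- (5/2)).
Proof.
  intros Hd Hs HR Hw Hc.
  assert (HD := D_le3 d Hd).
  set (K := W d v R0 * Rpower R0 (5/2)).
  assert (HK : 0 <= K) by (unfold K; apply Rmult_le_pos; [apply Hw; lra| left; apply Rpower_pos]).
  apply (upper_cmp d v v' v'' R0 (fun x => K * Rpower x (- (5/2)))
     (fun x => K * (- (5/2)) * Rpower x (- (5/2)) / x)
     (fun x => K * (5/2) * (5/2 + 1) * Rpower x (- (5/2)) / x ^ 2)); auto.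
  - intros x Hx. apply dpsi. lra.
  - intros x Hx. apply dpsi'. lra.
  - unfold K. rewrite Rpower_Ropp. assert (H := Rpower_pos R0 (5/2)). right. field. lra.
  - intros x Hx. apply Rmult_le_pos; auto. left; apply Rpower_pos.
  - intros x Hx. rewrite Lpsi by lra.
    specialize (Hc x ltac:(lra)).
    assert (HP : 0 <= K * Rpower x (- (5/2))) by (apply Rmult_le_pos; auto; left; apply Rpower_pos).
    assert (Hx2 : 0 < x ^ 2) by (apply pow_lt; lra).
    set (P := K * Rpower x (- (5/2))) in *.
    set (V := Vinf d x) in *.
    assert (HV : V = 2 * (4 - INR d) / x ^ 2) by auto.
    assert (E : ((5 / 2) ^ 2 - (INR d - 1 - 1) * (5 / 2)) / x ^ 2 <= 19 / 10 * V).
    { rewrite HV. apply (Rmult_le_reg_r (x ^ 2)); auto. field_simplify; try lra. }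
    assert (E2 : 19 / 10 * V <= 2 * V - W d v x) by lra.
    assert (E3 : ((5 / 2) ^ 2 - (INR d - 1 - 1) * (5 / 2)) / x ^ 2 <= 2 * V - W d v x) by lra.
    apply Rmult_le_compat_r; auto.
Qed.

Lemma Rpower_split x a b : Rpower x (- (a + b)) = Rpower x (- a) * Rpower x (- b).
Proof. rewrite <- Rpower_plus. f_equal. ring. Qed.

Lemma upper_b2 d v v' v'' R0 : (1 <= d <= 3)%nat ->
  Sol (INR d - 1) v v' v'' -> 0 < R0 ->
  (forall x, 0 < x -> 0 <= W d v x) ->
  (forall x, R0 <= x -> W d v x <= Vinf d x / 10) ->
  forall x, R0 <= x -> W d v x <= 2 * (Rpower R0 (p_exp d) / Rpower x (p_exp d)) * W d v R0.
Proof.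
  intros Hd Hs HR Hw Hc.
  assert (HD := D_le3 d Hd).
  assert (Hb1 := upper_b1 d v v' v'' R0 Hd Hs HR Hw Hc).
  destruct (p_facts d Hd) as [Hp1 Hp2].
  set (p := p_exp d) in *.
  set (W0 := W d v R0).
  assert (HW0 : 0 <= W0) by (apply Hw; lra).
  set (K := 2 * W0 * Rpower R0 p).
  assert (HK : 0 <= K) by (unfold K; assert (Hr0 := Rpower_pos R0 p); nra).
  set (u := Rpower R0 (/ 2)).
  assert (Hu : 0 < u) by apply Rpower_pos.
  set (c2 := K * / 2 * u).
  set (P := fun x => K * Rpower x (- p) - c2 * Rpower x (- (p + / 2))).
  assert (Hut : forall x, R0 <= x -> u * Rpower x (- (/ 2)) <= 1).
  { intros x Hx. unfold u. rewrite Rpower_Ropp.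
    assert (Rpower R0 (/ 2) <= Rpower x (/ 2)) by (apply Rle_Rpower_l; lra).
    assert (Hx2 := Rpower_pos x (/ 2)).
    apply (Rmult_le_reg_r (Rpower x (/ 2))); auto. rewrite Rmult_assoc, Rinv_l by lra. lra. }
  assert (HPle : forall x, R0 <= x -> P x <= K * Rpower x (- p)).
  { intros x Hx. unfold P. assert (0 <= c2 * Rpower x (- (p + / 2))).
    { unfold c2. apply Rmult_le_pos; [|left; apply Rpower_pos]. nra. }
    lra. }
  assert (HPge : forall x, R0 <= x -> 0 <= P x).
  { intros x Hx. unfold P. rewrite Rpower_split.
    specialize (Hut x Hx). assert (Hpx := Rpower_pos x (- p)).
    unfold c2.
    replace (K * Rpower x (- p) - K * / 2 * u * (Rpower x (- p) * Rpower x (- (/ 2))))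
      with (K * Rpower x (- p) * (1 - / 2 * (u * Rpower x (- (/ 2))))) by ring.
    apply Rmult_le_pos; [nra| lra]. }
  intros x Hx.
  assert (E : W d v x <= P x).
  { apply (upper_cmp d v v' v'' R0 P
     (fun x => K * (- p) * Rpower x (- p) / x - c2 * (- (p + / 2)) * Rpower x (- (p + / 2)) / x)
     (fun x => K * p * (p + 1) * Rpower x (- p) / x ^ 2
               - c2 * (p + / 2) * (p + / 2 + 1) * Rpower x (- (p + / 2)) / x ^ 2)); auto.
    - intros y Hy. apply derivable_pt_lim_minus; apply dpsi; lra.
    - intros y Hy. apply derivable_pt_lim_minus; apply dpsi'; lra.
    - right. unfold P, c2, u, K, W0. rewrite Rpower_split.
      rewrite (Rpower_Ropp R0 p), (Rpower_Ropp R0 (/ 2)).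
      assert (H1 := Rpower_pos R0 p). assert (H2 := Rpower_pos R0 (/ 2)). field. lra.
    - intros y Hy.
      replace (K * p * (p + 1) * Rpower y (- p) / y ^ 2 -
         c2 * (p + / 2) * (p + / 2 + 1) * Rpower y (- (p + / 2)) / y ^ 2 +
         (INR d - 1) / y * (K * - p * Rpower y (- p) / y -
            c2 * - (p + / 2) * Rpower y (- (p + / 2)) / y))
      with ((K * p * (p + 1) * Rpower y (- p) / y ^ 2 + (INR d - 1) / y * (K * - p * Rpower y (- p) / y))
           - (c2 * (p + / 2) * (p + / 2 + 1) * Rpower y (- (p + / 2)) / y ^ 2 +
              (INR d - 1) / y * (c2 * - (p + / 2) * Rpower y (- (p + / 2)) / y))) by ring.
      rewrite !Lpsi by lra.
      replace (INR d - 1 - 1) with (INR d - 2) by ring. rewrite Hp2.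
      assert (Hy0 : 0 < y) by lra.
      assert (Hy2 : 0 < y ^ 2) by (apply pow_lt; lra).
      specialize (Hb1 y ltac:(lra)). fold W0 in Hb1.
      assert (Hc0 := Hc R0 ltac:(lra)). fold W0 in Hc0.
      assert (Hwy := Hw y Hy0).
      rewrite Rpower_split in *.
      replace (5 / 2) with (2 + / 2) in Hb1 by field.
      rewrite Rpower_split, Rpower_plus in Hb1.
      rewrite Rpower_m2 in Hb1 by lra.
      replace (Rpower R0 2) with (R0 ^ 2) in Hb1.
      2:{ replace 2 with (INR 2) at 1 by (simpl; ring). symmetry. apply Rpower_pow; lra. }
      fold u in Hb1.
      set (A := Rpower y (- p)) in *. set (t := Rpower y (- (/ 2))) in *.
      assert (HA : 0 < A) by apply Rpower_pos. assert (Ht : 0 < t) by apply Rpower_pos.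
      assert (HPle' := HPle y ltac:(lra)). unfold P in HPle'. rewrite Rpower_split in HPle'. fold A t in HPle'.
      assert (HPge' := HPge y ltac:(lra)). unfold P in HPge'. rewrite Rpower_split in HPge'. fold A t in HPge'.
      unfold Vinf in *.
      set (N := (p + / 2) ^ 2 - (INR d - 2) * (p + / 2) - 4 * (4 - INR d)).
      assert (HN : N = p + / 4 - (INR d - 2) / 2) by (unfold N; nra).
      assert (HN2 : 2 * (4 - INR d) / 5 <= N) by (rewrite HN; nra).
      assert (HW0b : W0 * R0 ^ 2 <= 2 * (4 - INR d) / 10).
      { assert (0 < R0 ^ 2) by (apply pow_lt; lra).
        apply (Rmult_le_reg_r (/ R0 ^ 2)). apply Rinv_0_lt_compat; auto.
        rewrite Rmult_assoc, Rinv_r by lra. unfold Rdiv in *. lra. }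
      set (w := W d v y) in *.
      assert (Hkey : w * (K * A) <= N / y ^ 2 * (c2 * (A * t))).
      { apply Rle_trans with (W0 * (R0 ^ 2 * u) * (/ y ^ 2 * t) * (K * A)).
        - apply Rmult_le_compat_r; [nra|]. unfold Rdiv in Hb1. lra.
        - unfold c2. 
          replace (W0 * (R0 ^ 2 * u) * (/ y ^ 2 * t) * (K * A)) with ((W0 * R0 ^ 2) * (u * t * K * A / y ^ 2)) by (field; lra).
          replace (N / y ^ 2 * (K * / 2 * u * (A * t))) with ((N / 2) * (u * t * K * A / y ^ 2)) by (field; lra).
          apply Rmult_le_compat_r.
          + apply Rmult_le_pos; [|left; apply Rinv_0_lt_compat; auto]. 
            apply Rmult_le_pos; [|lra]. apply Rmult_le_pos; [|lra]. nra.
          + lra. }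
      assert (Eq : 4 * (4 - INR d) / y ^ 2 * (K * A) -
        ((p + / 2) ^ 2 - (INR d - 2) * (p + / 2)) / y ^ 2 * (c2 * (A * t)) =
        2 * (2 * (4 - INR d) / y ^ 2) * (K * A - c2 * (A * t)) - N / y ^ 2 * (c2 * (A * t)))
        by (unfold N; field; lra).
      rewrite Eq. unfold P. rewrite Rpower_split. fold A t.
      rewrite Rmult_minus_distr_r.
      assert (w * (K * A - c2 * (A * t)) <= w * (K * A)) by (apply Rmult_le_compat_l; lra).
      lra. }
  eapply Rle_trans; [exact E|].
  apply Rle_trans with (K * Rpower x (- p)); [apply HPle; lra|].
  right. unfold K, W0. rewrite Rpower_Ropp. field. assert (Hxp := Rpower_pos x p). lra.
Qed.


Lemma Rpower_1_base y : Rpower 1 y = 1.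
Proof. unfold Rpower. rewrite ln_1, Rmult_0_r. apply exp_0. Qed.

Lemma close_somewhere d v v' v'' : (1 <= d <= 3)%nat ->
  Sol (INR d - 1) v v' v'' ->
  exists rs, 0 < rs /\ 9 / 10 * Vinf d rs <= v rs.
Proof.
  intros Hd Hs. assert (HD := D_le3 d Hd).
  apply NNPP. intro Hno.
  assert (Hlt : forall x, 0 < x -> v x < 9 / 10 * Vinf d x).
  { intros x Hx. destruct (Rlt_or_le (v x) (9 / 10 * Vinf d x)); auto.
    exfalso; apply Hno; exists x; auto. }
  destruct Hs as [Hp [H1 [H2 Ho]]].
  set (q := 49 / 25).
  set (K := v 1).
  assert (HK : 0 < K) by (apply Hp; lra).
  assert (Hlow : forall x, 1 <= x -> K * Rpower x (- q) <= v x).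
  { intros x Hx. cut (0 <= v x - K * Rpower x (- q)); [lra|].
    apply (MP_half (fun x => v x - K * Rpower x (- q)) (fun x => v' x - K * (- q) * Rpower x (- q) / x)
       (fun x => v'' x - K * q * (q + 1) * Rpower x (- q) / x ^ 2) 1); auto.
    - intros r Hr. apply derivable_pt_lim_minus; [apply H1; lra| apply dpsi; lra].
    - intros r Hr. apply derivable_pt_lim_minus; [apply H2; lra| apply dpsi'; lra].
    - rewrite Rpower_Ropp, Rpower_1_base. unfold K. right. field.
    - intros m Hm. destruct (decay_pow K q ltac:(unfold q; lra) m Hm) as [b [Hb1 Hb]].
      exists b. intros r Hr. specialize (Hb r Hr).
      assert (0 < v r) by (apply Hp; lra). lra.
    - intros r Hr Hneg Hd0. cbv beta in *.
      assert (Hr0 : 0 < r) by lra.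
      assert (E : v'' r = v r ^ 2 - (INR d - 1) / r * v' r) by (rewrite <- (Ho r Hr0); ring).
      rewrite E.
      assert (E2 : v' r = K * - q * Rpower r (- q) / r) by lra. rewrite E2.
      assert (L := Lpsi (INR d - 1) K q r Hr0).
      set (Q := q ^ 2 - (INR d - 1 - 1) * q) in *.
      assert (HQ : 9 / 10 * (2 * (4 - INR d)) <= Q) by (unfold Q, q; nra).
      assert (Hv := Hlt r Hr0). unfold Vinf in Hv.
      assert (Hvp : 0 < v r) by auto.
      assert (Hr2 : 0 < r ^ 2) by (apply pow_lt; lra).
      assert (Hvv : v r ^ 2 <= Q / r ^ 2 * v r).
      { assert (v r < 9 / 10 * (2 * (4 - INR d)) / r ^ 2) by (unfold Rdiv in *; lra).
        assert (9 / 10 * (2 * (4 - INR d)) / r ^ 2 <= Q / r ^ 2).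
        { unfold Rdiv. apply Rmult_le_compat_r; [left; apply Rinv_0_lt_compat; auto| auto]. }
        nra. }
      assert (HQp : 0 < Q / r ^ 2) by (apply Rdiv_lt_0_compat; [lra|auto]).
      assert (v r ^ 2 - (K * q * (q + 1) * Rpower r (- q) / r ^ 2 + (INR d - 1) / r * (K * - q * Rpower r (- q) / r))
              <= Q / r ^ 2 * (v r - K * Rpower r (- q))) by (rewrite L; nra).
      assert (Q / r ^ 2 * (v r - K * Rpower r (- q)) < 0) by nra.
      lra. }
  set (x := Rmax 1 (Rpower (6 / K) 25)).
  assert (Hx1 : 1 <= x) by apply Rmax_l.
  assert (Hx2 : Rpower (6 / K) 25 <= x) by apply Rmax_r.
  assert (Hx0 : 0 < x) by lra.
  specialize (Hlow x Hx1). specialize (Hlt x Hx0). unfold Vinf in Hlt.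
  assert (E : 6 / K <= Rpower x (/ 25)).
  { replace (6 / K) with (Rpower (Rpower (6 / K) 25) (/ 25)).
    apply Rle_Rpower_l; [lra| split; [apply Rpower_pos| auto]].
    rewrite Rpower_mult. replace (25 * / 25) with 1 by field. apply Rpower_1.
    apply Rdiv_lt_0_compat; lra. }
  assert (E2 : Rpower x (- q) = Rpower x (/ 25) / x ^ 2).
  { replace (- q) with (/ 25 + - (INR 2)) by (unfold q; simpl; field).
    rewrite Rpower_plus, Rpower_Ropp, Rpower_pow by lra. field; lra. }
  rewrite E2 in Hlow.
  assert (Hx2' : 0 < x ^ 2) by (apply pow_lt; lra).
  assert (K * (Rpower x (/ 25) / x ^ 2) * x ^ 2 <= v x * x ^ 2) by (apply Rmult_le_compat_r; lra).
  assert (v x * x ^ 2 < 9 / 10 * (2 * (4 - INR d) / x ^ 2) * x ^ 2) by (apply Rmult_lt_compat_r; lra).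
  replace (K * (Rpower x (/ 25) / x ^ 2) * x ^ 2) with (K * Rpower x (/ 25)) in H by (field; lra).
  replace (9 / 10 * (2 * (4 - INR d) / x ^ 2) * x ^ 2) with (9 / 10 * (2 * (4 - INR d))) in H0 by (field; lra).
  assert (6 <= K * Rpower x (/ 25)).
  { apply (Rmult_le_compat_l K) in E; [|lra]. replace (K * (6 / K)) with 6 in E by (field; lra). lra. }
  lra.
Qed.


Lemma dscale (f f' : R -> R) mu c t : 0 < mu -> 0 < t ->
  (forall x, 0 < x -> derivable_pt_lim f x (f' x)) ->
  derivable_pt_lim (fun t => c * f (mu * t)) t (c * mu * f' (mu * t)).
Proof.
  intros Hm Ht Hf.
  replace (c * mu * f' (mu * t)) with (c * (f' (mu * t) * mu)) by ring.
  apply derivable_pt_lim_scal.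
  apply (derivable_pt_lim_comp (fun t => mu * t) f t mu (f' (mu * t))).
  - assert (H := derivable_pt_lim_scal id mu t 1 (derivable_pt_lim_id t)).
    rewrite Rmult_1_r in H. exact H.
  - apply Hf. nra.
Qed.

Lemma pow_scale d mu t : (1 <= d <= 3)%nat ->
  t ^ (d - 1) * mu ^ 3 = mu ^ (4 - d) * (mu * t) ^ (d - 1).
Proof. intros Hd. destruct d as [|[|[|[|]]]]; try lia; simpl; ring. Qed.

Lemma flux_cmp d lam v v' v'' v0 v0' v0'' mu : (1 <= d <= 3)%nat -> 0 < lam ->
  Sol (INR d - 1) v v' v'' ->
  (forall eps, 0 < eps -> exists delta, 0 < delta /\
       forall r, 0 < r < delta ->
         Rabs (sphere_area d * r ^ (d - 1) * v' r + 2 * lam) < eps) ->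
  Sol (INR d - 1) v0 v0' v0'' ->
  (forall x, 0 < x -> - 2 <= sphere_area d * x ^ (d - 1) * v0' x) ->
  (forall x, 0 < x -> v0 x <= Vinf d x) ->
  0 < mu -> mu ^ (4 - d) < lam ->
  forall t, 0 < t -> mu ^ 2 * v0 (mu * t) <= v t.
Proof.
  intros Hd Hl Hs Hfl Hs0 Hf0 Hb0 Hmu Hml t Ht.
  assert (HS := sphere_pos d Hd).
  destruct Hs as [Hp [H1 [H2 Ho]]]. destruct Hs0 as [Hp0 [H10 [H20 Ho0]]].
  cut (0 <= v t - mu ^ 2 * v0 (mu * t)); [lra|].
  apply (MP_zero (fun t => v t - mu ^ 2 * v0 (mu * t))
                 (fun t => v' t - mu ^ 2 * mu * v0' (mu * t))
                 (fun t => v'' t - mu ^ 2 * mu * mu * v0'' (mu * t))); auto.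
  - intros x Hx. apply derivable_pt_lim_minus; auto. apply dscale; auto.
  - intros x Hx. apply derivable_pt_lim_minus; auto.
    apply (dscale v0' v0'' mu (mu ^ 2 * mu)); auto.
  - destruct (Hfl (lam - mu ^ (4 - d))) as [del [Hdel Hd2]]; [lra|].
    exists del. split; auto. intros r Hr.
    specialize (Hd2 r Hr). apply Rabs_def2 in Hd2. destruct Hd2 as [Hd2 _].
    assert (Hr0 : 0 < r) by lra.
    assert (Hmr : 0 < mu * r) by nra.
    specialize (Hf0 (mu * r) Hmr).
    assert (Hm4 : 0 < mu ^ (4 - d)) by (apply pow_lt; lra).
    assert (E : sphere_area d * r ^ (d - 1) * (mu ^ 2 * mu * v0' (mu * r)) =
                mu ^ (4 - d) * (sphere_area d * (mu * r) ^ (d - 1) * v0' (mu * r))).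
    { replace (mu ^ 2 * mu) with (mu ^ 3) by ring.
      replace (sphere_area d * r ^ (d - 1) * (mu ^ 3 * v0' (mu * r))) with
        (sphere_area d * v0' (mu * r) * (r ^ (d - 1) * mu ^ 3)) by ring.
      rewrite pow_scale by auto. ring. }
    assert (sphere_area d * r ^ (d - 1) * (v' r - mu ^ 2 * mu * v0' (mu * r)) < 0).
    { rewrite Rmult_minus_distr_l, E. nra. }
    assert (Hpr : 0 < sphere_area d * r ^ (d - 1)) by (apply Rmult_lt_0_compat; auto; apply pow_lt; lra).
    nra.
  - intros m Hm. destruct (decay_inv2 (2 * (4 - INR d)) m Hm) as [b Hb].
    exists (Rmax b 1). intros r Hr.
    assert (b <= r) by (generalize (Rmax_l b 1); lra).
    assert (Hr0 : 0 < r) by (generalize (Rmax_r b 1); lra).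
    specialize (Hb r H). assert (0 < v r) by auto.
    assert (Hmr : 0 < mu * r) by nra.
    specialize (Hb0 (mu * r) Hmr). unfold Vinf in Hb0.
    assert (mu ^ 2 * v0 (mu * r) <= 2 * (4 - INR d) / r ^ 2).
    { replace (2 * (4 - INR d) / r ^ 2) with (mu ^ 2 * (2 * (4 - INR d) / (mu * r) ^ 2)) by (field; lra).
      apply Rmult_le_compat_l; auto. apply pow_le; lra. }
    lra.
  - intros r Hr Hneg Hd0. cbv beta in *.
    assert (Hmr : 0 < mu * r) by nra.
    assert (E1 : v'' r = v r ^ 2 - (INR d - 1) / r * v' r) by (rewrite <- (Ho r Hr); ring).
    assert (E2 : v0'' (mu * r) = v0 (mu * r) ^ 2 - (INR d - 1) / (mu * r) * v0' (mu * r))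
      by (rewrite <- (Ho0 (mu * r) Hmr); ring).
    rewrite E1, E2.
    assert (E3 : v' r = mu ^ 2 * mu * v0' (mu * r)) by lra.
    replace (v r ^ 2 - (INR d - 1) / r * v' r -
      mu ^ 2 * mu * mu * (v0 (mu * r) ^ 2 - (INR d - 1) / (mu * r) * v0' (mu * r)))
      with ((v r + mu ^ 2 * v0 (mu * r)) * (v r - mu ^ 2 * v0 (mu * r))
            - (INR d - 1) / r * (v' r - mu ^ 2 * mu * v0' (mu * r))) by (field; lra).
    rewrite E3, Rminus_diag, Rmult_0_r, Rminus_0_r.
    assert (0 < v r) by auto. assert (0 < v0 (mu * r)) by auto.
    assert (0 < mu ^ 2) by (apply pow_lt; lra).
    assert (0 < v r + mu ^ 2 * v0 (mu * r)) by nra.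
    nra.
Qed.


Theorem lemma5p4 (d : nat) (hd : (1 <= d <= 3)%nat) :
  exists lamstar C : R, 0 < lamstar /\
    forall V : R -> R -> R,
      (forall lam, 0 < lam -> IsVlam d lam (V lam)) ->
      forall R0 : R, 0 < R0 ->
        (forall r lam, R0 <= r -> 0 < lam ->
           0 < Rpower R0 (p_exp d) / Rpower r (p_exp d) * (Vinf d R0 - V lam R0) /\
           Rpower R0 (p_exp d) / Rpower r (p_exp d) * (Vinf d R0 - V lam R0)
             <= Vinf d r - V lam r) /\
        (forall r lam, R0 <= r -> lamstar / R0 ^ (4 - d) <= lam ->
           Vinf d r - V lam r
             <= C * (Rpower R0 (p_exp d) / Rpower r (p_exp d)) * (Vinf d R0 - V lam R0)).
Proof.
  destruct (classic (exists V0 : R -> R -> R, forall lam, 0 < lam -> IsVlam d lam (V0 lam)))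
    as [[V0 HV0] | Hno].
  2:{ exists 1, 1. split; [lra|]. intros V HV. exfalso. apply Hno. exists V. exact HV. }
  destruct (HV0 1 ltac:(lra)) as [Hp0 [v0' [v0'' [H10 [H20 [Ho0 Hf0]]]]]].
  assert (Hs0 : Sol (INR d - 1) (V0 1) v0' v0'') by (repeat split; auto).
  assert (Hfl0 := flux_lower d 1 (V0 1) v0' v0'' hd Hs0 Hf0).
  assert (Hb0 := below_inf d 1 (V0 1) v0' v0'' hd ltac:(lra) Hs0 Hfl0).
  destruct (close_somewhere d (V0 1) v0' v0'' hd Hs0) as [rs [Hrs Hclose]].
  exists (2 * rs ^ (4 - d)), 2. split.
  { assert (0 < rs ^ (4 - d)) by (apply pow_lt; lra). lra. }
  intros V HV R0 HR0.
  split.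
  - intros r lam Hr Hl.
    destruct (HV lam Hl) as [Hp [v' [v'' [H1 [H2 [Ho Hf]]]]]].
    assert (Hs : Sol (INR d - 1) (V lam) v' v'') by (repeat split; auto).
    assert (Hfl := flux_lower d lam (V lam) v' v'' hd Hs Hf).
    assert (Hpos := W_pos d lam (V lam) v' v'' hd Hl Hs Hfl R0 HR0).
    assert (Hlow := lower_p d lam (V lam) v' v'' hd Hl Hs Hfl R0 r HR0 Hr).
    unfold W in *. split; auto.
    apply Rmult_lt_0_compat; auto. apply Rdiv_lt_0_compat; apply Rpower_pos.
  - intros r lam Hr Hlam.
    assert (HR0n : 0 < R0 ^ (4 - d)) by (apply pow_lt; lra).
    assert (Hrsn : 0 < rs ^ (4 - d)) by (apply pow_lt; lra).
    assert (Hl : 0 < lam).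
    { assert (0 < 2 * rs ^ (4 - d) / R0 ^ (4 - d)) by (apply Rdiv_lt_0_compat; lra). lra. }
    assert (Hlam' : 2 * rs ^ (4 - d) <= lam * R0 ^ (4 - d)).
    { apply (Rmult_le_compat_r (R0 ^ (4 - d))) in Hlam; [|lra].
      unfold Rdiv in Hlam. rewrite Rmult_assoc, Rinv_l in Hlam by lra. lra. }
    destruct (HV lam Hl) as [Hp [v' [v'' [H1 [H2 [Ho Hf]]]]]].
    assert (Hs : Sol (INR d - 1) (V lam) v' v'') by (repeat split; auto).
    assert (Hfl := flux_lower d lam (V lam) v' v'' hd Hs Hf).
    assert (Hw : forall x, 0 < x -> 0 <= W d (V lam) x).
    { intros x Hx. unfold W. assert (H := below_inf d lam (V lam) v' v'' hd Hl Hs Hfl x Hx). lra. }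
    assert (Hc : forall x, R0 <= x -> W d (V lam) x <= Vinf d x / 10).
    { intros x Hx.
      assert (Hx0 : 0 < x) by lra.
      set (mu := rs / x).
      assert (Hmu : 0 < mu) by (apply Rdiv_lt_0_compat; lra).
      assert (Hmx : mu * x = rs) by (unfold mu; field; lra).
      assert (Hmn : mu ^ (4 - d) < lam).
      { assert (Hxn : R0 ^ (4 - d) <= x ^ (4 - d)) by (apply pow_incr; lra).
        assert (Hxn0 : 0 < x ^ (4 - d)) by (apply pow_lt; lra).
        assert (E : mu ^ (4 - d) * x ^ (4 - d) = rs ^ (4 - d)) by (rewrite <- Rpow_mult_distr, Hmx; auto).
        apply (Rmult_lt_reg_r (x ^ (4 - d))); auto. rewrite E.
        assert (lam * R0 ^ (4 - d) <= lam * x ^ (4 - d)) by (apply Rmult_le_compat_l; lra).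
        lra. }
      assert (Hcmp := flux_cmp d lam (V lam) v' v'' (V0 1) v0' v0'' mu hd Hl Hs Hf Hs0
                        ltac:(intros y Hy; specialize (Hfl0 y Hy); lra) Hb0 Hmu Hmn x Hx0).
      rewrite Hmx in Hcmp.
      assert (E : mu ^ 2 * Vinf d rs = Vinf d x).
      { unfold Vinf. rewrite <- Hmx. field. split; lra. }
      assert (0 < mu ^ 2) by (apply pow_lt; lra).
      assert (mu ^ 2 * (9 / 10 * Vinf d rs) <= mu ^ 2 * V0 1 rs) by (apply Rmult_le_compat_l; lra).
      unfold W. lra. }
    assert (Hup := upper_b2 d (V lam) v' v'' R0 hd Hs HR0 Hw Hc r Hr).
    unfold W in Hup. exact Hup.
Qed.
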